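(* Let $n\ge1$, $k\ge1$ be integers and $p$ a prime with $p\nmid n$. Then $$\Phi^*_{p^kn}(x)=\frac{\Phi^*_n(x^{p^k})}{\Phi^*_n(x)}.$$
   Context: $d\mid\mid n$ means $d\mid n$ and $\gcd(d,n/d)=1$; $(j,n)_*=\max\{d: d\mid j,\ d\mid\mid n\}$; $\Phi^*_n(x)=\prod_{1\le j\le n,\ (j,n)_*=1}(x-e^{2\pi i j/n})$. *)

(* Defs.v *)
From HB Require Import structures.
From mathcomp Require Import all_boot all_order all_algebra all_field.
Set Implicit Arguments. Unset Strict Implicit. Unset Printing Implicit Defensive.
Import GRing.Theory Num.Theory.

Definition udvd (d n : nat) : bool := (d %| n) && coprime d (n %/ d).

Definition ugcd (j n : nat) : nat :=
  \max_(d < n.+1 | (d %| j) && udvd d n) d.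

(* Unitary cyclotomic polynomial Phi*_n, built from a primitive n-th root of
   unity z (playing the role of e^{2 pi i / n}):
   prod_{1 <= j <= n, (j,n)_* = 1} (X - z^j). *)
Definition ucyclotomic {R : nzRingType} (z : R) (n : nat) : {poly R} :=
  (\prod_(1 <= j < n.+1 | ugcd j n == 1%N) ('X - (z ^+ j)%:P))%R.

(* Main.v *)
Require Import Defs.
From HB Require Import structures.
From mathcomp Require Import all_boot all_order all_algebra all_field.
From mathcomp Require Import zify.
Import GRing.Theory Num.Theory.
Local Open Scope ring_scope.
Local Close Scope ring_scope.

Definition cnd (n j : nat) : bool :=
  [forall d : 'I_n.+1, (udvd d n && (d %| j)) ==> (d == 1%N :> nat)].

Lemma cndP n j : 0 < n ->
  reflect (forall d, udvd d n -> d %| j -> d = 1%N) (cnd n j).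
Proof.
move=> n0; apply: (iffP forallP) => [H d ud dj | H d].
- have dn : d < n.+1 by rewrite ltnS dvdn_leq // (andP ud).1.
  by have := H (Ordinal dn); rewrite /= ud dj /= => /eqP.
- by apply/implyP => /andP[ud dj]; apply/eqP; exact: H.
Qed.

Lemma ugcd_cnd j n : 0 < n -> 0 < j -> (ugcd j n == 1%N) = cnd n j.
Proof.
move=> n0 j0; apply/idP/idP => [/eqP H | /(cndP _ _ n0) H].
- apply/(cndP _ _ n0) => d ud dj.
  have dn : d < n.+1 by rewrite ltnS dvdn_leq // (andP ud).1.
  have le := @leq_bigmax_cond _ (fun i : 'I_n.+1 => (i %| j) && udvd i n)
     (fun i => nat_of_ord i) (Ordinal dn).
  rewrite /= dj ud /= in le; have := le isT; rewrite -/(ugcd j n) H.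
  have : d != 0%N by apply: contraTneq dj => ->; rewrite dvd0n -lt0n.
  lia.
- rewrite eqn_leq; apply/andP; split.
  + by apply/bigmax_leqP => i /andP[ij ui]; rewrite (H i ui ij).
  + have o1 : 1 < n.+1 by rewrite ltnS.
    have le := @leq_bigmax_cond _ (fun i : 'I_n.+1 => (i %| j) && udvd i n)
     (fun i => nat_of_ord i) (Ordinal o1).
    apply: le => /=; rewrite dvd1n /udvd dvd1n /= /coprime gcd1n //.
Qed.

Lemma cnd_mod n j : 0 < n -> cnd n (j %% n) = cnd n j.
Proof.
move=> n0; have E : forall d, udvd d n -> (d %| j %% n) = (d %| j).
  by move=> d /andP[dn _]; rewrite /dvdn modn_dvdm.
by apply/idP/idP => /(cndP _ _ n0) H; apply/(cndP _ _ n0) => d ud dj; apply (H d ud); move: dj; rewrite (E d ud).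
Qed.

Lemma cnd_mul n q s : 0 < n -> coprime q n -> cnd n (q * s) = cnd n s.
Proof.
move=> n0 cq; have E : forall d, udvd d n -> (d %| q * s) = (d %| s).
  move=> d /andP[dn _]; rewrite Gauss_dvdr //.
  by apply: coprime_dvdl dn _; rewrite coprime_sym.
by apply/idP/idP => /(cndP _ _ n0) H; apply/(cndP _ _ n0) => d ud dj; apply (H d ud); move: dj; rewrite (E d ud).
Qed.

Lemma cnd_N p k n t : prime p -> 0 < k -> 0 < n -> ~~ (p %| n) ->
  cnd (p ^ k * n) t = cnd n t && ~~ (p ^ k %| t).
Proof.
move=> pp k0 n0 npn.
have cqn : coprime (p ^ k) n by apply: coprimeXl; rewrite prime_coprime.
have p1 : 1 < p := prime_gt1 pp.
have q1 : 1 < p ^ k by rewrite -{1}(expn0 p) ltn_exp2l.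
move: cqn q1; set q := p ^ k => cqn q1.
have q0 : 0 < q by lia.
have N0 : 0 < q * n by rewrite muln_gt0 q0.
apply/idP/idP.
- move/(cndP _ _ N0) => H; apply/andP; split.
  + apply/(cndP _ _ n0) => d /andP[dn cd] dt; apply: H dt.
    rewrite /udvd dvdn_mull //= -muln_divA // coprimeMr cd andbT.
    by apply: coprime_dvdl dn _; rewrite coprime_sym.
  + apply/negP => qt; have := H q _ qt.
    rewrite /udvd dvdn_mulr //= mulKn // cqn => /(_ isT); lia.
- case/andP => /(cndP _ _ n0) Hn nqt; apply/(cndP _ _ N0) => d /andP[dN cdN] dt.
  have d0 : 0 < d by apply: contraTT N0; rewrite -!eqn0Ngt => /eqP d0; move: dN; rewrite d0 dvd0n.
  set a := gcdn d q; set b := gcdn d n.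
  have cab : coprime a b.
    by apply: coprime_dvdl (dvdn_gcdr d q) (coprime_dvdr (dvdn_gcdr d n) cqn).
  have dab : d = a * b.
    apply/eqP; rewrite eqn_dvd; apply/andP; split.
    * rewrite /a /b muln_gcdl dvdn_gcd dvdn_mulr //= muln_gcdr mulnC dvdn_gcd.
      by rewrite dvdn_mulr //= mulnC.
    * by rewrite Gauss_dvd // !dvdn_gcdl.
  have ad : a %| d by rewrite dab dvdn_mulr.
  have bd : b %| d by rewrite dab dvdn_mull.
  have a0 : 0 < a by move: d0; rewrite dab muln_gt0 => /andP[].
  have b0 : 0 < b by move: d0; rewrite dab muln_gt0 => /andP[].
  have [q' Eq] := dvdnP (dvdn_gcdr d q).
  have [n' En] := dvdnP (dvdn_gcdr d n).
  have Nd : (q * n) %/ d = q' * n'.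
    have -> : q * n = (q' * n') * d by rewrite dab Eq En; lia.
    by rewrite mulnK.
  rewrite Nd in cdN.
  have b1 : b = 1%N.
    apply: Hn; last by apply: dvdn_trans bd dt.
    rewrite /udvd dvdn_gcdr /= {1}En mulnK //.
    apply: coprime_dvdl bd _; apply: coprime_dvdr cdN; exact: dvdn_mull.
  have a1 : a = 1%N.
    have cad : coprime a q'.
      apply: coprime_dvdl ad _; apply: coprime_dvdr cdN; exact: dvdn_mulr.
    have [i ik ai] := dvdn_pfactor a k pp (dvdn_gcdr d q).
    case: i ik ai => [|i] ik ai; first by rewrite ai.
    have pa : p %| a by rewrite ai expnS dvdn_mulr.
    have cpq : coprime p q' := coprime_dvdl pa cad.
    have cq'q : coprime q' q by rewrite /q coprime_sym coprime_pexpl // coprime_sym.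
    have q'q : q' %| q by rewrite Eq dvdn_mulr.
    have q'1 : q' = 1%N by move: cq'q; rewrite /coprime (gcdn_idPl q'q) => /eqP.
    have aq : a = q by rewrite Eq q'1 mul1n.
    by move: nqt; rewrite -aq (dvdn_trans ad dt).
  by rewrite dab a1 b1.
Qed.
Local Open Scope ring_scope.

Lemma prod_period (R : comNzRingType) (f : nat -> R) n m :
  (forall t, f (t + n)%N = f t) ->
  \prod_(m <= t < m + n) f t = \prod_(0 <= t < n) f t.
Proof.
move=> Hf; elim: m => [|m IH]; first by rewrite add0n.
case: n Hf IH => [|n] Hf IH; first by rewrite !big_geq ?addn0.
have lt : (m < m + n.+1)%N by rewrite addnS ltnS leq_addr.
rewrite -IH (big_ltn lt) addSn big_nat_recr /=; last by rewrite addnS ltnS leq_addr.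
by rewrite Hf mulrC.
Qed.

Lemma prod_split (R : comNzRingType) (f : nat -> R) a b :
  \prod_(0 <= t < a * b) f t = \prod_(0 <= i < a) \prod_(0 <= j < b) f (i * b + j)%N.
Proof.
elim: a => [|a IH]; first by rewrite mul0n !big_geq.
rewrite mulSnr big_nat_recr //= (big_cat_nat (n := (a * b)%N)) ?leq_addr //= IH.
congr (_ * _).
rewrite -{1}(add0n (a * b)%N) big_addn addKn.
by apply: eq_bigr => j _; rewrite addnC.
Qed.

Lemma factor_Xn_sub_c (F : fieldType) (q : nat) (u c : F) :
  q.-primitive_root u ->
  \prod_(0 <= m < q) ('X - (c * u ^+ m)%:P) = 'X^q - (c ^+ q)%:P.
Proof.
move=> pu; have q0 : (0 < q)%N := prim_order_gt0 pu.
have [->|c0] := eqVneq c 0.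
  rewrite expr0n eqn0Ngt q0 /= subr0.
  under eq_bigr do rewrite mul0r subr0.
  by rewrite prodr_const_nat subn0.
set zn := [seq c * u ^+ i | i <- index_iota 0 q].
transitivity (\prod_(w <- zn) ('X - w%:P)); first by rewrite big_map.
rewrite [RHS](@all_roots_prod_XsubC _ _ zn); first 1 last.
- by rewrite size_XnsubC // size_map size_iota subn0.
- apply/allP=> _ /mapP[i _ ->] /=; rewrite rootE !hornerE.
  by rewrite exprMn exprAC (prim_expr_order pu) expr1n mulr1 subrr.
- rewrite uniq_rootsE map_inj_in_uniq ?iota_uniq // => i j.
  rewrite !mem_index_iota => ltin ltjn /(mulfI c0) /eqP.
  by rewrite (eq_prim_root_expr pu) !modn_small // => /eqP.
by rewrite (monicP (monicXnsubC _ q0)) scale1r.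
Qed.

Definition G (x : algC) (m t : nat) : {poly algC} :=
  if cnd m t then 'X - (x ^+ t)%:P else 1.

Lemma ucyc_G (x : algC) m : (0 < m)%N -> x ^+ m = 1 ->
  ucyclotomic x m = \prod_(0 <= t < m) G x m t.
Proof.
move=> m0 xm; rewrite /ucyclotomic big_mkcond /=.
rewrite (eq_big_nat _ _ (F2 := G x m)); last first.
  by move=> i /andP[i1 _]; rewrite /G ugcd_cnd.
rewrite -[m.+1]add1n prod_period // => t.
by rewrite /G -cnd_mod // modnDr cnd_mod // exprD xm mulr1.
Qed.

Theorem mainTheorem8 (n k p : nat) (z : algC) :
  (1 <= n)%N -> (1 <= k)%N -> prime p -> ~~ (p %| n)%N ->
  (p ^ k * n)%N.-primitive_root z ->
  ucyclotomic z (p ^ k * n) =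
    (ucyclotomic (z ^+ (p ^ k)) n \Po 'X^(p ^ k)) %/ ucyclotomic (z ^+ (p ^ k)) n.
Proof.
move=> n0 k0 pp npn pz.
have cnd_NE t := @cnd_N p k n t pp k0 n0 npn.
have cqn : coprime (p ^ k) n by apply: coprimeXl; rewrite prime_coprime.
have p1 : (1 < p)%N := prime_gt1 pp.
have q1 : (1 < p ^ k)%N by rewrite -{1}(expn0 p) ltn_exp2l.
move: cqn q1 pz cnd_NE; set q := (p ^ k)%N => cqn q1 pz cnd_NE.
have q0 : (0 < q)%N by lia.
have N0 : (0 < q * n)%N by rewrite muln_gt0 q0.
set w := z ^+ q.
have pw : n.-primitive_root w.
  by have := exp_prim_root pz q; rewrite gcdnMr mulKn.
have pu : q.-primitive_root (z ^+ n).
  by have := exp_prim_root pz n; rewrite gcdnMl mulnK.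
set f := fun t => if cnd n t then 'X - (z ^+ t)%:P else 1 : {poly algC}.
set K := fun t => if cnd n t && (q %| t)%N then 'X - (z ^+ t)%:P else 1 : {poly algC}.
have Hcomp : ucyclotomic w n \Po 'X^q =
    ucyclotomic z (q * n) * ucyclotomic w n.
  rewrite (@ucyc_G w n n0 (prim_expr_order pw)).
  rewrite (@ucyc_G z _ N0 (prim_expr_order pz)).
  rewrite (big_morph (fun r => r \Po 'X^q) (fun x y => comp_polyM x y _)
      (_ : 1 \Po 'X^q = 1)); last by rewrite -polyC1 comp_polyC.
  transitivity (\prod_(0 <= i < n) \prod_(0 <= m < q) f (m * n + i)%N).
    apply: eq_bigr => i _; rewrite /G /f.
    have E : forall m, cnd n (m * n + i) = cnd n i.
      by move=> m; rewrite -cnd_mod // modnMDl cnd_mod.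
    case: (boolP (cnd n i)) => ci.
      under eq_bigr do rewrite E ci.
      rewrite comp_polyB comp_polyX comp_polyC.
      rewrite /w exprAC -(@factor_Xn_sub_c _ q (z ^+ n) (z ^+ i) pu).
      apply: eq_bigr => m _; rewrite -exprM -exprD.
      by have -> : (m * n + i = i + n * m)%N by lia.
    under eq_bigr do rewrite E (negbTE ci).
    by rewrite big1_eq -polyC1 comp_polyC.
  rewrite exchange_big_nat /= -prod_split.
  transitivity (\prod_(0 <= t < q * n) (G z (q * n) t * K t)).
    apply: eq_bigr => t _; rewrite /f /G /K cnd_NE.
    by case: (cnd n t); case: (q %| t)%N; rewrite /= ?mulr1 ?mul1r.
  rewrite big_split /=; congr (_ * _).
  rewrite mulnC prod_split; apply: eq_bigr => s _.
  rewrite big_ltn // addn0 big_nat_cond.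
  rewrite (eq_bigr (fun _ => 1)); last first.
    move=> r /andP[/andP[r1 rq] _]; rewrite /K dvdn_addr ?dvdn_mull //.
    by rewrite gtnNdvd // andbF.
  rewrite big1_eq mulr1 /K /G dvdn_mull // andbT mulnC cnd_mul //.
  by rewrite exprM.
rewrite Hcomp mulpK //; apply: monic_neq0; rewrite /ucyclotomic; apply: monic_prod_XsubC.
Qed.
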